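(* The one-dimensional subalgebras of ${\rm A}_1$ are exactly $\langle e_1\rangle$, $\langle e_2\rangle$ and $\langle \alpha e_2+e_3\rangle$ ($\alpha\in\mathbb{C}$). Up to automorphisms of ${\rm A}_1$, every one-dimensional subalgebra of ${\rm A}_1$ is equivalent to $\langle e_1\rangle$ or $\langle e_2\rangle$.
   Context: ${\rm A}_1$ is the complex algebra with basis $e_1,e_2,e_3$ whose only nonzero products of basis elements are $e_1e_i=e_ie_1=e_i$ ($i=1,2,3$) (it carries the involution $\overline{e_1}=e_1,\overline{e_2}=e_2,\overline{e_3}=-e_3$, which plays no role here). A subalgebra is a linear subspace closed under multiplication (it need not contain $e_1$). Two subalgebras are equivalent up to automorphisms if one is mapped onto the other by an algebra automorphism (invertible linear map $\varphi$ with $\varphi(xy)=\varphi(x)\varphi(y)$). $\langle S\rangle$ denotes the linear span of $S$. *)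

(* Defs.v *)
From HB Require Import structures.
From mathcomp Require Import all_boot all_order all_algebra.
From mathcomp Require Export complex.
From mathcomp Require Import reals.
Set Implicit Arguments. Unset Strict Implicit. Unset Printing Implicit Defensive.
Import Order.TTheory GRing.Theory Num.Theory.
Local Open Scope ring_scope.

Section A1.
Variable F : fieldType.

(* Elements of A_1 are coordinate rows x = x_1 e1 + x_2 e2 + x_3 e3
   (indices 0,1,2 of 'I_3). *)
Definition e1 : 'rV[F]_3 := delta_mx 0 (0 : 'I_3).
Definition e2 : 'rV[F]_3 := delta_mx 0 (1 : 'I_3).
Definition e3 : 'rV[F]_3 := delta_mx 0 (2 : 'I_3).

(* Bilinear product of A_1: e1 e_i = e_i e1 = e_i, all other products of
   basis elements are 0. *)
Definition mulA (x y : 'rV[F]_3) : 'rV[F]_3 :=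
  \row_(k < 3) (if (k : nat) == 0%N then x 0 0 * y 0 0
                else x 0 0 * y 0 k + x 0 k * y 0 0).

Definition is_subalgebra (U : {vspace 'rV[F]_3}) : Prop :=
  forall x y, x \in U -> y \in U -> mulA x y \in U.

Definition is_automorphism (f : 'rV[F]_3 -> 'rV[F]_3) : Prop :=
  [/\ (forall (a : F) x y, f (a *: x + y) = a *: f x + f y),
      bijective f &
      (forall x y, f (mulA x y) = mulA (f x) (f y))].

Definition equiv_aut (U V : {vspace 'rV[F]_3}) : Prop :=
  exists f, is_automorphism f /\
    (forall v, v \in V <-> exists2 u, u \in U & f u = v).
End A1.

(* Main.v *)
Require Import Defs.
From HB Require Import structures.
From mathcomp Require Import all_boot all_order all_algebra.
From mathcomp Require Import complex reals.
From mathcomp Require Import ring.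
Import Order.TTheory GRing.Theory Num.Theory.
Local Open Scope ring_scope.

Notation mulA := Defs.mulA.
Section H.
Context {F : fieldType}.

Lemma row3E (u : 'rV[F]_3) :
  u = u 0 0 *: e1 F + u 0 1 *: e2 F + u 0 2%:R *: e3 F.
Proof.
apply/rowP => k; rewrite !mxE.
by case: k => [[|[|[|k]]] Hk] //=; rewrite ?mulr1 ?mulr0 ?addr0 ?add0r //;
  congr (u _ _); apply/val_inj.
Qed.

Lemma mulA_Z (a b : F) (v : 'rV[F]_3) :
  mulA (a *: v) (b *: v) = (a * b) *: mulA v v.
Proof.
apply/rowP => k; rewrite !mxE.
by case: ifP => _; ring.
Qed.

Lemma line_sub (v : 'rV[F]_3) : mulA v v \in <[v]>%VS -> is_subalgebra <[v]>%VS.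
Proof.
move=> H x y /vlineP [a ->] /vlineP [b ->].
by rewrite mulA_Z memvZ.
Qed.

Lemma lineZ (c : F) (v : 'rV[F]_3) : c != 0 -> <[c *: v]>%VS = <[v]>%VS.
Proof.
move=> c0; case: (eqVneq v 0) => [->|v0]; first by rewrite scaler0.
apply/eqP; rewrite eqEdim !dim_vline scaler_eq0 (negbTE c0) v0 /=.
by rewrite -memvE memvZ // memv_line.
Qed.

Lemma dim1_line (U : {vspace 'rV[F]_3}) : \dim U = 1%N ->
  exists2 u, u != 0 & U = <[u]>%VS.
Proof.
move=> dU; have U0 : vpick U != 0.
  by rewrite vpick0 -dimv_eq0 dU.
exists (vpick U) => //; apply/eqP; rewrite eq_sym eqEdim dim_vline U0 dU.
by rewrite -memvE memv_pick.
Qed.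

End H.

Section H2.
Context {F : fieldType}.

Lemma eq3 (u v : 'rV[F]_3) : u 0 0 = v 0 0 -> u 0 1 = v 0 1 ->
  u 0 2%:R = v 0 2%:R -> u = v.
Proof.
move=> h0 h1 h2; rewrite (row3E u) (row3E v) h0 h1 h2 //.
Qed.

Lemma aut_scale (f : 'rV[F]_3 -> 'rV[F]_3) : is_automorphism f ->
  forall k w, f (k *: w) = k *: f w.
Proof.
case=> lin _ _ k w.
have f0 : f 0 = 0.
  have := lin 1 0 0; rewrite scale1r addr0 scale1r => h.
  by apply: (@addrI _ (f 0)); rewrite addr0 -h.
by have := lin k w 0; rewrite addr0 f0 addr0.
Qed.

Lemma equiv_line (f : 'rV[F]_3 -> 'rV[F]_3) w v : is_automorphism f ->
  f w = v -> equiv_aut <[w]>%VS <[v]>%VS.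
Proof.
move=> fA fw; exists f; split => // v'; split.
  by case/vlineP => k ->; exists (k *: w); rewrite ?memvZ ?memv_line // aut_scale // fw.
by case=> u /vlineP [k ->] <-; rewrite aut_scale // fw memvZ ?memv_line.
Qed.

Definition fal (al : F) (x : 'rV[F]_3) : 'rV[F]_3 :=
  \row_(k < 3) (if (k : nat) == 0%N then x 0 0 else if (k : nat) == 1%N then x 0 2%:R
                else x 0 1 - al * x 0 2%:R).
Definition gal (al : F) (x : 'rV[F]_3) : 'rV[F]_3 :=
  \row_(k < 3) (if (k : nat) == 0%N then x 0 0 else if (k : nat) == 1%N then x 0 2%:R + al * x 0 1
                else x 0 1).

Lemma fal_aut al : is_automorphism (fal al).
Proof.
split.
- by move=> a x y; apply: eq3; rewrite !mxE /=; ring.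
- exists (gal al) => x; apply: eq3; rewrite !mxE /=; ring.
- by move=> x y; apply: eq3; rewrite !mxE /=; ring.
Qed.

Lemma id_aut : is_automorphism (@id 'rV[F]_3).
Proof. by split => //; exists id. Qed.

End H2.

Section H3.
Context {F : fieldType}.

Lemma part1 (U : {vspace 'rV[F]_3}) :
     (is_subalgebra U /\ \dim U = 1%N) <->
     [\/ U = <[e1 _]>%VS, U = <[e2 _]>%VS
       | exists alpha : F, U = <[alpha *: e2 _ + e3 _]>%VS].
Proof.
split.
  case=> sU /dim1_line [u u0 UE]; subst U.
  have /vlineP [l E] := sU u u (memv_line u) (memv_line u).
  have /rowP E' := E.
  have h0 := E' 0; have h1 := E' 1; have h2 := E' 2%:R.
  rewrite /= !mxE /= in h0 h1 h2.
  have uE := row3E u.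
  move: u0 uE h0 h1 h2; set a := u 0 0; set b := u 0 1; set c := u 0 2%:R.
  move=> u0 uE h0 h1 h2.
  case: (eqVneq a 0) => a0.
    case: (eqVneq c 0) => c0.
      have b0 : b != 0.
        by apply: contraNneq u0 => b0; rewrite uE a0 b0 c0 !scale0r !addr0.
      by constructor 2; rewrite uE a0 c0 !scale0r addr0 add0r lineZ.
    constructor 3; exists (b / c).
    rewrite uE a0 scale0r add0r -[RHS](lineZ _ _ c0) scalerDr scalerA.
    by rewrite mulrC divfK.
  have la : l = a by apply: (mulIf a0); rewrite -h0.
  rewrite la in h1 h2.
  have b0 : b = 0.
    have : b * a = 0 by apply: (@addrI _ (a * b)); rewrite addr0.
    by move/eqP; rewrite mulf_eq0 (negbTE a0) orbF => /eqP.
  have c0 : c = 0.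
    have : c * a = 0 by apply: (@addrI _ (a * c)); rewrite addr0.
    by move/eqP; rewrite mulf_eq0 (negbTE a0) orbF => /eqP.
  by constructor 1; rewrite uE b0 c0 !scale0r !addr0 lineZ.
have e10 : e1 F != 0.
  by apply/eqP => h; have /rowP/(_ 0) := h; rewrite !mxE /= => /eqP; rewrite oner_eq0.
have e20 : e2 F != 0.
  by apply/eqP => h; have /rowP/(_ 1) := h; rewrite !mxE /= => /eqP; rewrite oner_eq0.
case=> [->|->|[al ->]]; split.
- apply: line_sub; suff -> : mulA (e1 F) (e1 F) = e1 F by rewrite memv_line.
  by apply: eq3; rewrite !mxE /=; ring.
- by rewrite dim_vline e10.
- apply: line_sub; suff -> : mulA (e2 F) (e2 F) = 0 by rewrite mem0v.
  by apply: eq3; rewrite !mxE /=; ring.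
- by rewrite dim_vline e20.
- apply: line_sub; suff -> : mulA (al *: e2 F + e3 F) (al *: e2 F + e3 F) = 0 by rewrite mem0v.
  by apply: eq3; rewrite !mxE /=; ring.
- rewrite dim_vline; case: eqP => // h.
  by have /rowP/(_ 2%:R) := h; rewrite !mxE /= => /eqP; rewrite ?mulr0 ?add0r ?addr0 oner_eq0.
Qed.

End H3.

Theorem mainTheorem4 (R : realType) :
  (forall U : {vspace 'rV[R[i]]_3},
     (is_subalgebra U /\ \dim U = 1%N) <->
     [\/ U = <[e1 _]>%VS, U = <[e2 _]>%VS
       | exists alpha : R[i], U = <[alpha *: e2 _ + e3 _]>%VS]) /\
  (forall U : {vspace 'rV[R[i]]_3},
     is_subalgebra U -> \dim U = 1%N ->
     equiv_aut U <[e1 _]>%VS \/ equiv_aut U <[e2 _]>%VS).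
Proof.
split; first exact: part1.
move=> U sU dU; have := proj1 (part1 U) (conj sU dU).
case=> [->|->|[al ->]].
- by left; apply: (equiv_line _ _ _ id_aut).
- by right; apply: (equiv_line _ _ _ id_aut).
- right; apply: (equiv_line _ _ _ (fal_aut al)).
  by apply: eq3; rewrite !mxE /=; ring.
Qed.
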